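(* Let $F$ be a field of characteristic zero and let $A$ be a $\#$-superalgebra over $F$. If $A$ is a PI-algebra, then there is a real number $\overline d$ such that $c_n^{grs}(A)\leq \overline d^{\,n}$ for every $n\geq1$.
   Context: All algebras are associative over $F$. A superalgebra is $A=A_0\oplus A_1$ with $A_iA_j\subseteq A_{(i+j)\bmod 2}$. A superinvolution is an $F$-linear map $\#:A\to A$ with $A_i^\#\subseteq A_i$, $(c^\#)^\#=c$, $(ab)^\#=(-1)^{\deg a\deg b}b^\#a^\#$ for homogeneous $a,b$; a graded involution is an $F$-linear map $\#$ with $A_i^\#\subseteq A_i$, $(c^\#)^\#=c$, $(ab)^\#=b^\#a^\#$. A $\#$-superalgebra is a superalgebra with one of these. $A_i^{\pm}=\{a\in A_i:a^\#=\pm a\}$. $A$ is a PI-algebra if it satisfies a nontrivial ordinary polynomial identity. Let $\mathcal F$ be the free non-unital associative algebra on variables $y_{i,j}$ (symmetric) and $z_{i,j}$ ($i\in\{0,1\}$, $j\ge1$, skew), with variables of index $i$ of $\mathbb Z_2$-degree $i$, equipped with the induced superinvolution or graded involution ($y^\#=y$, $z^\#=-z$). A $\#$-superidentity of $A$ is an element of $\mathcal F$ vanishing under all substitutions $y_{0,j}\mapsto A_0^+$, $z_{0,j}\mapsto A_0^-$, $y_{1,j}\mapsto A_1^+$, $z_{1,j}\mapsto A_1^-$; $Id_2^\#(A)$ denotes their set. $P_n^{grs}$ is the span of the monomials $w_{\sigma(1)}\cdots w_{\sigma(n)}$, $\sigma\in S_n$, $w_i\in\{y_{0,i},z_{0,i},y_{1,i},z_{1,i}\}$,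 and $c_n^{grs}(A)=\dim P_n^{grs}/(P_n^{grs}\cap Id_2^\#(A))$. *)

(* Defs.v *)
From HB Require Import structures.
From mathcomp Require Import all_boot all_order all_algebra all_fingroup.
From mathcomp Require Import boolp reals.
Set Implicit Arguments. Unset Strict Implicit. Unset Printing Implicit Defensive.
Import Order.TTheory GRing.Theory Num.Theory.
Local Open Scope ring_scope.

Section Defs.
Variables (F : fieldType) (A : lmodType F) (mul : A -> A -> A).

Definition is_assoc_algebra : Prop :=
  [/\ forall (a : F) (x y z : A), mul (a *: x + y) z = a *: mul x z + mul y z,
      forall (a : F) (x y z : A), mul z (a *: x + y) = a *: mul z x + mul z y
    & forall x y z : A, mul x (mul y z) = mul (mul x y) z].

(* Z_2-grading A = A_0 (+) A_1, given by gr false = A_0, gr true = A_1 *)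
Definition is_Z2_grading (gr : bool -> A -> Prop) : Prop :=
  [/\ forall i, gr i 0,
      forall i (a : F) (x y : A), gr i x -> gr i y -> gr i (a *: x + y),
      forall x : A, exists x0 x1, [/\ gr false x0, gr true x1 & x = x0 + x1],
      forall x : A, gr false x -> gr true x -> x = 0
    & forall i j (x y : A), gr i x -> gr j y -> gr (i (+) j) (mul x y)].

(* sharp is a superinvolution (super = true) or a graded involution
   (super = false) of the superalgebra (A, gr) *)
Definition is_sharp (gr : bool -> A -> Prop) (sharp : A -> A) (super : bool)
  : Prop :=
  [/\ forall (a : F) (x y : A), sharp (a *: x + y) = a *: sharp x + sharp y,
      forall i x, gr i x -> gr i (sharp x),
      forall x, sharp (sharp x) = x
    & forall i j (x y : A), gr i x -> gr j y ->
        sharp (mul x y) =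
        (if [&& super, i & j] then -1 else 1) *: mul (sharp y) (sharp x)].

Definition lprod (l : seq A) : A :=
  match l with [::] => 0 | a :: l' => foldl mul a l' end.

(* ordinary PI: a nonzero element of the free non-unital algebra F<x_0,x_1,...>,
   given as sum_{w in ws} c w * w over distinct nonempty words, vanishing on A *)
Definition is_PI : Prop :=
  exists (ws : seq (seq nat)) (c : seq nat -> F),
    [/\ uniq ws, all (fun w => w != [::]) ws, has (fun w => c w != 0) ws
      & forall phi : nat -> A,
          \sum_(w <- ws) c w *: lprod (map phi w) = 0].

(* variable kinds: (i, b) stands for y_{i,_} if b = false, z_{i,_} if b = true *)
Definition kind := (bool * bool)%type.

Definition kind_space (gr : bool -> A -> Prop) (sharp : A -> A) (k : kind)
  (x : A) : Prop :=
  gr k.1 x /\ sharp x = (if k.2 then - x else x).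

(* monomials w_{s(1)}...w_{s(n)} of P_n^grs: a permutation s and the kind of
   each variable index i (w_i in {y_{0,i}, z_{0,i}, y_{1,i}, z_{1,i}}) *)
Local Notation mon n := ({perm 'I_n} * {ffun 'I_n -> kind})%type.

(* elements of P_n^grs: coefficient vectors over the monomial basis *)
Local Notation Pn n := {ffun mon n -> F^o}.

Definition mon_eval n (sub : kind -> 'I_n -> A) (m : mon n) : A :=
  lprod [seq sub (m.2 (m.1 j)) (m.1 j) | j <- enum 'I_n].

Definition Pn_eval n (f : Pn n) (sub : kind -> 'I_n -> A) : A :=
  \sum_(m : mon n) f m *: mon_eval sub m.

Definition is_grs_identity (gr : bool -> A -> Prop) (sharp : A -> A) n
  (f : Pn n) : Prop :=
  forall sub : kind -> 'I_n -> A,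
    (forall k j, kind_space gr sharp k (sub k j)) -> Pn_eval f sub = 0.

Definition indep_mod_Id gr sharp n (k : nat) : Prop :=
  exists g : 'I_k -> Pn n, forall a : 'I_k -> F,
    is_grs_identity gr sharp (\sum_(i < k) a i *: g i) -> forall i, a i = 0.

(* c_n^grs(A) = dim P_n^grs / (P_n^grs \cap Id_2^#(A)), as the maximal size of
   a linearly independent family in the quotient (bounded by dim P_n^grs) *)
Definition cn_grs gr sharp (n : nat) : nat :=
  \max_(k < #|{: mon n}|.+1 | `[< indep_mod_Id gr sharp n k >]) k.

End Defs.

(* Main.v *)
Require Import Defs.
From mathcomp Require Import all_boot all_order all_algebra all_fingroup.
From mathcomp Require Import boolp reals.
Import Order.TTheory GRing.Theory Num.Theory.

Module Part1.
Import Order.TTheory GRing.Theory Num.Theory.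
Set Implicit Arguments. Unset Strict Implicit. Unset Printing Implicit Defensive.
Local Open Scope ring_scope.

Section Alg.
Variables (F : fieldType) (A : lmodType F) (mul : A -> A -> A).
Hypothesis hA : is_assoc_algebra mul.

Lemma mmulA x y z : mul x (mul y z) = mul (mul x y) z.
Proof. by case: hA. Qed.

Lemma mulr_lin z a x y : mul z (a *: x + y) = a *: mul z x + mul z y.
Proof. by case: hA. Qed.
Lemma mull_lin z a x y : mul (a *: x + y) z = a *: mul x z + mul y z.
Proof. by case: hA. Qed.

Lemma mmulr0 z : mul z 0 = 0.
Proof.
have := mulr_lin z 1 0 0; rewrite !scale1r addr0.
by move/(congr1 (fun v => v - mul z 0)); rewrite subrr addrK => <-.
Qed.
Lemma mmul0r z : mul 0 z = 0.
Proof.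
have := mull_lin z 1 0 0; rewrite !scale1r addr0.
by move/(congr1 (fun v => v - mul 0 z)); rewrite subrr addrK => <-.
Qed.
Lemma mmulrZ z a x : mul z (a *: x) = a *: mul z x.
Proof. by have := mulr_lin z a x 0; rewrite addr0 mmulr0 addr0. Qed.
Lemma mmulZr z a x : mul (a *: x) z = a *: mul x z.
Proof. by have := mull_lin z a x 0; rewrite addr0 mmul0r addr0. Qed.
Lemma mmulrDr z x y : mul z (x + y) = mul z x + mul z y.
Proof. by have := mulr_lin z 1 x y; rewrite !scale1r. Qed.
Lemma mmulrDl z x y : mul (x + y) z = mul x z + mul y z.
Proof. by have := mull_lin z 1 x y; rewrite !scale1r. Qed.

Lemma mmul_sumr (I : Type) (r : seq I) (P : pred I) (G : I -> A) z :
  mul z (\sum_(i <- r | P i) G i) = \sum_(i <- r | P i) mul z (G i).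
Proof.
elim/big_rec2: _ => [|i y1 y2 _ <-]; first exact: mmulr0.
by rewrite mmulrDr.
Qed.
Lemma mmul_suml (I : Type) (r : seq I) (P : pred I) (G : I -> A) z :
  mul (\sum_(i <- r | P i) G i) z = \sum_(i <- r | P i) mul (G i) z.
Proof.
elim/big_rec2: _ => [|i y1 y2 _ <-]; first exact: mmul0r.
by rewrite mmulrDl.
Qed.

Lemma foldl_mulA x y l : foldl mul (mul x y) l = mul x (foldl mul y l).
Proof.
elim: l y => [|z l IH] y //=.
by rewrite -mmulA IH.
Qed.

Lemma lprod_cons x l : l != [::] -> lprod mul (x :: l) = mul x (lprod mul l).
Proof. by case: l => [|y l] //= _; rewrite foldl_mulA. Qed.

Lemma lprod_cat l1 l2 : l1 != [::] -> l2 != [::] ->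
  lprod mul (l1 ++ l2) = mul (lprod mul l1) (lprod mul l2).
Proof.
elim: l1 => [|x l1 IH] // _ ne2.
case: (eqVneq l1 [::]) => [->|ne1].
  by rewrite cat1s lprod_cons.
rewrite cat_cons (@lprod_cons x (l1 ++ l2)); last by case: (l1) ne1.
by rewrite IH // (@lprod_cons x l1) // mmulA.
Qed.

Lemma lprod_flatten (Ys : seq (seq A)) : Ys != [::] -> all (fun Y => Y != [::]) Ys ->
  lprod mul (flatten Ys) = lprod mul (map (lprod mul) Ys).
Proof.
elim: Ys => [|Y Ys IH] // _ /= /andP[neY neYs].
case: (eqVneq Ys [::]) => [->|ne] /=; first by rewrite cats0.
rewrite lprod_cat //; last first.
  case: Ys ne neYs {IH} => [|Z Zs] //= _ /andP[]; by case: Z.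
by rewrite IH // -lprod_cons //; case: (Ys) ne.
Qed.

End Alg.

End Part1.
Import Part1.

Module Part2.
Import Order.TTheory GRing.Theory Num.Theory.
Set Implicit Arguments. Unset Strict Implicit. Unset Printing Implicit Defensive.
Local Open Scope ring_scope.

Fixpoint allseq (m k : nat) : seq (seq 'I_m) :=
  if k is k'.+1 then [seq p :: s | p <- index_enum 'I_m, s <- allseq m k']
  else [:: [::]].

Lemma mem_allseq m k s : (s \in allseq m k) = (size s == k).
Proof.
elim: k s => [|k IH] s /=; first by case: s.
apply/allpairsPdep/idP.
  by case=> p [s' [_ ins' ->]] /=; rewrite eqSS -IH.
case: s => [|p s] //=; rewrite eqSS -IH => ins.
by exists p, s; rewrite mem_index_enum.
Qed.

Lemma uniq_allseq m k : uniq (allseq m k).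
Proof.
elim: k => [|k IH] //=.
apply: allpairs_uniq_dep => //; first exact: index_enum_uniq.
by move=> [p1 s1] [p2 s2] _ _ /= [-> ->].
Qed.

Lemma all2_andl (T1 T2 : Type) (P : T2 -> bool) (R : T1 -> T2 -> bool) w s :
  all2 (fun x p => P p && R x p) w s = all P s && all2 R w s.
Proof.
elim: w s => [|x w IH] [|p s] //=; first by rewrite andbF.
by rewrite IH -!andbA; congr andb; rewrite andbCA.
Qed.

Lemma all2_mapeq (T1 : eqType) (T2 : Type) (f : T2 -> T1) w s :
  all2 (fun x p => f p == x) w s = (map f s == w).
Proof.
elim: w s => [|x w IH] [|p s] //=.
by rewrite IH eqseq_cons.
Qed.

Section Expand.
Variables (F : fieldType) (A : lmodType F) (mul : A -> A -> A).
Hypothesis hA : is_assoc_algebra mul.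

Lemma lprod_expand m (Q : nat -> 'I_m -> bool) (a : 'I_m -> A) (w : seq nat) :
  w != [::] ->
  lprod mul (map (fun x => \sum_(p : 'I_m) (Q x p)%:R *: a p) w) =
  \sum_(s <- allseq m (size w)) (all2 Q w s)%:R *: lprod mul (map a s).
Proof.
elim: w => [|x w IH] // _.
rewrite [size _]/= big_allpairs_dep.
case: (eqVneq w [::]) => [->|new].
  rewrite /=; apply: eq_bigr => p _.
  by rewrite big_seq1 /= andbT.
rewrite (@lprod_cons _ _ _ hA); last by case: (w) new.
rewrite IH // (mmul_suml hA).
apply: eq_bigr => p _.
rewrite (mmulZr hA) (mmul_sumr hA) scaler_sumr big_seq [RHS]big_seq.
apply: eq_bigr => s ins.
have nes : s != [::] by move: ins; rewrite mem_allseq; case: (s); case: (w) new.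
rewrite (mmulrZ hA) map_cons (lprod_cons hA); last by case: (s) nes.
rewrite scalerA /=.
by congr (_ *: _); case: (Q x p); case: (all2 Q w s); rewrite ?mul1r ?mul0r.
Qed.

End Expand.

Lemma set_eq_uniq d (s : seq 'I_d) : size s = d -> ([set p in s] == setT) = uniq s.
Proof.
move=> ss; rewrite eqEcard subsetT cardsT card_ord cardsE /=.
apply/idP/idP => [h|/card_uniqP ->]; last by rewrite ss.
apply/card_uniqP; apply/eqP; rewrite eqn_leq card_size /= ss; exact: h.
Qed.

Lemma multilin (F : fieldType) (A : lmodType F) (mul : A -> A -> A) :
  is_assoc_algebra mul -> is_PI mul ->
  exists d (b : seq 'I_d -> F), [/\ (0 < d)%N, b (enum 'I_d) != 0 &
    forall a : 'I_d -> A, \sum_(s <- allseq d d | uniq s) b s *: lprod mul (map a s) = 0].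
Proof.
move=> hA [ws [c [uws news hasc hid]]].
pose P := fun m => has (fun w => (c w != 0) && (size w == m)) ws.
have exP : exists m, P m.
  case/hasP: hasc => w inw cw; exists (size w); apply/hasP; exists w => //.
  by rewrite cw eqxx.
have ubP : forall m, P m -> (m <= \max_(w <- ws) size w)%N.
  by move=> m /hasP[w inw /andP[_ /eqP <-]]; exact: (leq_bigmax_seq _ inw).
case: (ex_maxnP exP ubP) => d Pd maxd.
case/hasP: Pd => v inv /andP[cv /eqP sv].
have maxw : forall w, w \in ws -> c w != 0 -> (size w <= d)%N.
  by move=> w inw cw; apply: maxd; apply/hasP; exists w => //; rewrite cw eqxx.
have d0 : (0 < d)%N by rewrite -sv lt0n size_eq0; exact: (allP news v inv).
pose nv := fun p : 'I_d => nth 0%N v p.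
pose b := fun s : seq 'I_d => \sum_(w <- ws) c w * (map nv s == w)%:R.
exists d, b; split => //.
  rewrite /b; have -> : map nv (enum 'I_d) = v.
    rewrite /nv (map_comp (nth 0%N v) val) val_enum_ord -sv; exact: mkseq_nth.
  rewrite (eq_bigr (fun w => if w == v then c w else 0)); last first.
    by move=> w _; rewrite eq_sym; case: eqP => [->|_]; rewrite ?mulr1 ?mulr0.
  by rewrite -big_mkcond -big_filter filter_pred1_uniq // big_seq1.
move=> a.
pose Qv := fun (x : nat) (p : 'I_d) => nv p == x.
pose L := fun s : seq 'I_d => lprod mul (map a s).
pose H := fun T : {set 'I_d} => \sum_(w <- ws) c w *:
  \sum_(s <- allseq d (size w)) (([set p in s] == T) && all2 Qv w s)%:R *: L s.
have C1 : forall S : {set 'I_d}, \sum_(T : {set 'I_d} | T \subset S) H T = 0.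
  move=> S.
  have h := hid (fun x => \sum_(p : 'I_d) ((p \in S) && (nv p == x))%:R *: a p).
  rewrite -[RHS]h /H exchange_big /= big_seq [RHS]big_seq.
  apply: eq_bigr => w inw.
  rewrite -scaler_sumr (lprod_expand hA); last exact: (allP news w inw).
  congr (_ *: _); rewrite exchange_big /=; apply: eq_bigr => s _.
  rewrite -scaler_suml; congr (_ *: _).
  rewrite (all2_andl (fun p => p \in S) Qv).
  have -> : all (fun p => p \in S) s = ([set p in s] \subset S).
    apply/allP/subsetP => hh x; first by rewrite inE; exact: hh.
    by move=> xs; apply: hh; rewrite inE.
  have [sub|nsub] := boolP ([set p in s] \subset S).
    rewrite (bigD1 [set p in s]) //= eqxx big1 ?addr0 // => T /andP[_ neT].
    by rewrite eq_sym (negbTE neT).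
  rewrite big1 // => T TS.
  have : [set p in s] != T by apply: contraNneq nsub => ->.
  by move/negbTE => ->.
have C2 : forall T, H T = 0.
  move=> T; move: {2}#|T|.+1 (ltnSn #|T|) => k.
  elim: k T => [//|k IH] T lt.
  have := C1 T; rewrite (bigD1 T) //= big1 ?addr0 // => T' /andP[sub neq].
  apply: IH; rewrite -ltnS; apply: leq_trans lt.
  by rewrite ltnS; apply: proper_card; rewrite properEneq neq sub.
rewrite -[RHS](C2 setT) /H; symmetry.
transitivity (\sum_(w <- ws) \sum_(s <- allseq d d | uniq s)
                 (c w * (map nv s == w)%:R) *: L s); last first.
  by rewrite exchange_big; apply: eq_bigr => s _; rewrite scaler_suml.
rewrite big_seq [RHS]big_seq; apply: eq_bigr => w inw.
case: (eqVneq (c w) 0) => [->|cw].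
  by rewrite scale0r big1 // => s _; rewrite mul0r scale0r.
have := maxw w inw cw; rewrite leq_eqVlt => /orP[/eqP sw | ltw].
  rewrite sw scaler_sumr [RHS]big_mkcond; apply: eq_big_seq => s ins.
  have ss : size s = d by move: ins; rewrite mem_allseq => /eqP.
  rewrite (set_eq_uniq ss) /Qv /nv (all2_mapeq (fun p : 'I_d => nth 0%N v p)).
  by case: (uniq s); rewrite /= ?scalerA // mulr0 scale0r.
rewrite big1_seq; last first.
  move=> s /andP[_ ins].
  have ss : size s = size w by move: ins; rewrite mem_allseq => /eqP.
  have -> : ([set p in s] == setT) = false.
    apply/negbTE; apply/negP => /eqP hs.
    have := card_size s; rewrite -cardsE hs cardsT card_ord ss.
    by rewrite leqNgt ltw.
  by rewrite /= mulr0n scale0r.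
rewrite scaler0 big1_seq // => s /andP[_ ins].
have ss : size s = d by move: ins; rewrite mem_allseq => /eqP.
have -> : (map nv s == w) = false.
  apply/negbTE; apply/negP => /eqP hs.
  by move: ltw; rewrite -hs size_map ss ltnn.
by rewrite mulr0 scale0r.
Qed.

End Part2.
Import Part2.

Module Part3.
Import Order.TTheory GRing.Theory Num.Theory.
Set Implicit Arguments. Unset Strict Implicit. Unset Printing Implicit Defensive.

Fixpoint ltlex (s t : seq nat) : bool :=
  match s, t with
  | x :: s', y :: t' => (x < y) || ((x == y) && ltlex s' t')
  | _, _ => false
  end.

Lemma ltlex_irr s : ltlex s s = false.
Proof. by elim: s => [|x s IH] //=; rewrite ltnn eqxx IH. Qed.

Lemma ltlex_trans s t u : ltlex s t -> ltlex t u -> ltlex s u.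
Proof.
elim: s t u => [|x s IH] [|y t] [|z u] //=.
case/orP=> [xy|/andP[/eqP <- st]]; case/orP=> [yz|/andP[/eqP <- tu]].
- by rewrite (ltn_trans xy yz).
- by rewrite xy.
- by rewrite yz.
- by rewrite eqxx (IH _ _ st tu) orbT.
Qed.

Lemma ltlex_catl u s t : ltlex (u ++ s) (u ++ t) = ltlex s t.
Proof. by elim: u => [|x u IH] //=; rewrite ltnn eqxx IH. Qed.

Lemma decomp (T : Type) (x0 : T) (P : seq nat) (L : seq T) :
  P != [::] -> sorted ltn P -> all (fun p => p < size L) P ->
  exists W0 Xs, [/\ L = W0 ++ flatten Xs, map (head x0) Xs = map (nth x0 L) P
                  & all (fun X => ~~ nilp X) Xs].
Proof.
elim/last_ind: P L => [|P p IH] L // _ sP aP.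
have pL : p < size L by move: aP; rewrite all_rcons => /andP[].
have hd : drop p L = nth x0 L p :: drop p.+1 L by rewrite (drop_nth x0).
case: (eqVneq P [::]) => [->|neP].
  exists (take p L), [:: drop p L]; split => //=.
  - by rewrite cats0 cat_take_drop.
  - by rewrite hd.
  - by rewrite hd.
have pw : pairwise ltn (rcons P p) by rewrite -sorted_pairwise //; exact: ltn_trans.
move: pw; rewrite -cats1 pairwise_cat => /and3P[/allrelP ar pwP _].
have ltp : forall x, x \in P -> x < p by move=> x xP; apply: ar; rewrite ?inE.
have [W0 [Xs [eL eh ne]]] : exists W0 Xs, [/\ take p L = W0 ++ flatten Xs,
   map (head x0) Xs = map (nth x0 (take p L)) P & all (fun X => ~~ nilp X) Xs].
  apply: IH => //; first by rewrite sorted_pairwise //; exact: ltn_trans.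
  apply/allP => x xP; rewrite size_take pL; exact: ltp.
exists W0, (rcons Xs (drop p L)); split.
- by rewrite flatten_rcons catA -eL cat_take_drop.
- rewrite map_rcons eh cats1 map_rcons hd /=; congr rcons.
  by apply/eq_in_map => x xP; rewrite nth_take // ltp.
- by rewrite all_rcons ne hd andbT.
Qed.

Lemma lexflat n (x0 : 'I_n) (Xs : seq (seq 'I_n)) (sv : seq nat) k :
  all (fun X => ~~ nilp X) Xs ->
  sorted (fun x y : 'I_n => y < x) (map (head x0) Xs) ->
  size sv = size Xs -> k < size Xs -> nth 0 sv k < size Xs ->
  (forall j, j < k -> nth 0 sv j = j) -> k < nth 0 sv k ->
  ltlex (map val (flatten (map (nth [::] Xs) sv))) (map val (flatten Xs)).
Proof.
move=> neX sh ssv ks vks hj kv.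
set Zs := map (nth [::] Xs) sv.
have sZ : size Zs = size Xs by rewrite size_map.
have tk : take k Zs = take k Xs.
  apply: (@eq_from_nth _ [::]); first by rewrite !size_take sZ.
  move=> i; rewrite size_take sZ ks => ik.
  rewrite !nth_take // (nth_map 0) ?hj // ssv (ltn_trans ik ks) //.
rewrite -(cat_take_drop k Zs) -(cat_take_drop k Xs) tk !flatten_cat !map_cat ltlex_catl.
rewrite (drop_nth [::]) ?sZ // (drop_nth [::] ks) /= !map_cat.
rewrite (nth_map 0) ?ssv //.
have tr : transitive (fun x y : 'I_n => y < x) by move=> a b c h1 h2; exact: ltn_trans h2 h1.
have := sorted_ltn_nth tr x0 sh; rewrite size_map => /(_ k (nth 0 sv k) ks vks kv).
rewrite !(nth_map [::]) //.
have := allP neX _ (mem_nth [::] vks); have := allP neX _ (mem_nth [::] ks).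
case: (nth [::] Xs k) => [|y Y] //; case: (nth [::] Xs (nth 0 sv k)) => [|z Z] //= _ _ zy.
by rewrite zy.
Qed.

Definition word n (s : 'S_n) : seq 'I_n := map s (enum 'I_n).

Lemma word_perm n (s : 'S_n) : perm_eq (word s) (enum 'I_n).
Proof.
apply: uniq_perm; first by rewrite map_inj_uniq ?enum_uniq //; exact: perm_inj.
  exact: enum_uniq.
move=> x; rewrite mem_enum inE; apply/mapP; exists (s^-1 x)%g; rewrite ?mem_enum //.
by rewrite permKV.
Qed.

Lemma size_word n (s : 'S_n) : size (word s) = n.
Proof. by rewrite size_map size_enum_ord. Qed.

Lemma nth_word n (s : 'S_n) (x0 p : 'I_n) : nth x0 (word s) p = s p.
Proof. by rewrite (nth_map x0) ?size_enum_ord // nth_ord_enum. Qed.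

Lemma perm_of_word n (l : seq 'I_n) : perm_eq l (enum 'I_n) -> exists t : 'S_n, word t = l.
Proof.
case: n l => [|n] l pl.
  exists 1%g; case: l pl => [|[]] // _; rewrite /word.
  by case: (enum 'I_0) => [|[]].
have sl : size l = n.+1 by rewrite (perm_size pl) size_enum_ord.
have ul : uniq l by rewrite (perm_uniq pl) enum_uniq.
pose f := fun j : 'I_n.+1 => nth j l j.
have finj : injective f.
  move=> j1 j2; rewrite /f (set_nth_default j1 j2) ?sl // => /eqP.
  by rewrite nth_uniq ?sl // => /eqP; exact: ord_inj.
exists (perm finj).
apply: (@eq_from_nth _ ord0); first by rewrite size_word sl.
move=> i; rewrite size_word => ilt.
rewrite (nth_map ord0) ?size_enum_ord // permE /f.
rewrite (set_nth_default ord0) ?sl ?ltn_ord //.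
by rewrite nth_enum_ord.
Qed.

Section Lat.
Local Open Scope ring_scope.
Variables (F : fieldType) (A : lmodType F) (mul : A -> A -> A).
Hypothesis hA : is_assoc_algebra mul.
Variables (d : nat) (be : seq 'I_d -> F).
Hypothesis hd : (0 < d)%N.
Hypothesis hb : be (enum 'I_d) != 0.
Hypothesis hid : forall a : 'I_d -> A,
  \sum_(s <- allseq d d | uniq s) be s *: lprod mul (map a s) = 0.
Variable n : nat.

Definition rel_ (s : 'S_n) : rel 'I_n := fun p q => (p < q)%N && (s q < s p)%N.
Definition bad (s : 'S_n) : Prop := exists P : seq 'I_n, size P = d /\ sorted (rel_ s) P.
Definition value (b : 'I_n -> A) (s : 'S_n) := lprod mul (map b (word s)).
Definition code (s : 'S_n) := map val (word s).
Definition spanned (s : 'S_n) := exists g : 'S_n -> F,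
  (forall t, g t != 0 -> ~ bad t) /\ forall b, value b s = \sum_t g t *: value b t.

Lemma step (sg : 'S_n) : bad sg -> exists (C : seq 'I_d -> F) (tau : seq 'I_d -> 'S_n),
  (forall s, s \in allseq d d -> uniq s -> s != enum 'I_d -> ltlex (code (tau s)) (code sg)) /\
  forall b, value b sg = \sum_(s <- allseq d d | (s != enum 'I_d) && uniq s) C s *: value b (tau s).
Proof.
case=> P [sP srt].
case: P sP srt => [|x0 P'] sP srt; first by move: hd; rewrite -sP.
set P := x0 :: P' in sP srt.
set L := word sg.
have sPv : sorted ltn (map val P) by rewrite sorted_map; apply: sub_sorted srt => p q /andP[].
have aPv : all (fun p => (p < size L)%N) (map val P).
  by apply/allP => x /mapP[p _ ->]; rewrite size_word ltn_ord.
have [W0 [Xs [eL eh ne]]] := @decomp _ x0 (map val P) L isT sPv aPv.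
have eh' : map (head x0) Xs = map sg P.
  by rewrite eh -map_comp; apply: eq_map => p /=; rewrite nth_word.
have sX : size Xs = d by rewrite -(size_map (head x0)) eh' size_map.
have sh : sorted (fun x y : 'I_n => (y < x)%N) (map (head x0) Xs).
  by rewrite eh' sorted_map; apply: sub_sorted srt => p q /andP[].
pose Zs := fun s : seq 'I_d => map (nth [::] Xs) (map val s).
pose l := fun s => W0 ++ flatten (Zs s).
have perm_s : forall s : seq 'I_d, uniq s -> size s = d -> perm_eq s (enum 'I_d).
  move=> s us ss; apply: uniq_perm => //; first exact: enum_uniq.
  have [] := @uniq_min_size _ s (enum 'I_d) us (fun x _ => mem_enum _ x).
    by rewrite size_enum_ord ss.
  by [].
have Ze : Zs (enum 'I_d) = Xs by rewrite /Zs val_enum_ord -sX; exact: mkseq_nth.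
have ZsXs : forall s : seq 'I_d, uniq s -> size s = d -> perm_eq (Zs s) Xs.
  move=> s us ss; rewrite -[X in perm_eq _ X]Ze /Zs.
  by apply: perm_map; apply: perm_map; exact: perm_s.
have lperm : forall s : seq 'I_d, uniq s -> size s = d -> perm_eq (l s) (enum 'I_n).
  move=> s us ss; apply: perm_trans (word_perm sg).
  by rewrite -/L eL perm_cat2l; apply: perm_flatten; exact: ZsXs.
have : forall s, exists t : 'S_n, uniq s && (size s == d) -> word t = l s.
  move=> s; case: (boolP (uniq s && (size s == d))) => [/andP[us /eqP ss]|_]; last by exists 1%g.
  by have [t ht] := perm_of_word (lperm s us ss); exists t.
case/choice => tau htau.
have ne_nth : forall i, (i < d)%N -> ~~ nilp (nth [::] Xs i).
  by move=> i id; apply: (allP ne); rewrite mem_nth // sX.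
pose a := fun (b : 'I_n -> A) (i : 'I_d) => lprod mul (map b (nth [::] Xs i)).
pose pm := fun (b : 'I_n -> A) (y : A) => if W0 is [::] then y else mul (lprod mul (map b W0)) y.
have hval : forall b (s : seq 'I_d), uniq s -> size s = d ->
    value b (tau s) = pm b (lprod mul (map (a b) s)).
  move=> b s us ss; rewrite /value htau ?us ?ss ?eqxx // /l map_cat map_flatten.
  have -> : lprod mul (map (a b) s) = lprod mul (flatten (map (map b) (Zs s))).
    rewrite (lprod_flatten hA).
    - by congr lprod; rewrite /Zs -!map_comp; apply: eq_map.
    - by rewrite /Zs; case: (s) ss => [sd|? ?] //; move: hd; rewrite -sd.
    - apply/allP => Y /mapP[Z /mapP[i /mapP[j js ->] ->] ->].
      by move: (ne_nth j (ltn_ord j)); case: (nth [::] Xs j).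
  rewrite /pm; case: (W0) => [|w W] //.
  rewrite (lprod_cat hA) //.
  rewrite /Zs; case: (s) ss => [|j s'] /=; first by move=> sd; move: hd; rewrite -sd.
  move=> _; move: (ne_nth j (ltn_ord j)); case: (nth [::] Xs j) => [|y Y] //.
have hpm : forall b (r : seq (seq 'I_d)) (Pr : pred (seq 'I_d)) (c : seq 'I_d -> F) (y : seq 'I_d -> A),
    pm b (\sum_(s <- r | Pr s) c s *: y s) = \sum_(s <- r | Pr s) c s *: pm b (y s).
  move=> b r Pr c y; rewrite /pm; case: (W0) => [|w W] //.
  by rewrite (mmul_sumr hA); apply: eq_bigr => s _; rewrite (mmulrZ hA).
have pm0 : forall b, pm b 0 = 0 by move=> b; rewrite /pm; case: (W0) => //= *; rewrite (mmulr0 hA).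
have eu : uniq (enum 'I_d) by exact: enum_uniq.
have es : size (enum 'I_d) = d by exact: size_enum_ord.
have vsg : forall b, value b sg = value b (tau (enum 'I_d)).
  by move=> b; rewrite /value htau ?eu ?es ?eqxx // /l Ze -eL.
exists (fun s => - (be (enum 'I_d))^-1 * be s), tau; split.
  move=> s ins us nes.
  have ss : size s = d by move: ins; rewrite mem_allseq => /eqP.
  rewrite /code htau ?us ?ss ?eqxx // /l -/L eL !map_cat ltlex_catl.
  set sv := map val s.
  have ssv : size sv = d by rewrite size_map.
  have usv : uniq sv by rewrite map_inj_uniq //; exact: val_inj.
  have svd : forall i, (i < d)%N -> (nth 0%N sv i < d)%N.
    by move=> i id; rewrite /sv (nth_map (Ordinal hd)) ?ss ?ltn_ord.
  have [k0 hk0] : exists k, (k < d)%N && (nth 0%N sv k != k).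
    case: (pickP (fun k : 'I_d => nth 0%N sv k != k)) => [k hk|hnone].
      by exists k; rewrite ltn_ord hk.
    exfalso; move/negP: nes; apply; apply/eqP.
    apply: (@inj_map _ _ val val_inj); rewrite val_enum_ord -/sv.
    apply: (@eq_from_nth _ 0%N); first by rewrite ssv size_iota.
    move=> i; rewrite ssv => id; rewrite nth_iota // add0n.
    by have := hnone (Ordinal id) => /= /negbFE /eqP.
  have exk : exists k, (fun k => (k < d)%N && (nth 0%N sv k != k)) k by exists k0.
  case: (ex_minnP exk) => k /andP[kd nk] mink.
  have hj : forall j, (j < k)%N -> nth 0%N sv j = j.
    move=> j jk; apply/eqP; move: (jk); apply: contraTT => nj; rewrite -leqNgt; apply: mink.
    by rewrite nj (ltn_trans jk kd).
  have kv : (k < nth 0%N sv k)%N.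
    rewrite ltn_neqAle eq_sym nk /= leqNgt; apply/negP => vk.
    have := hj _ vk => /eqP; rewrite nth_uniq ?ssv ?svd // => /eqP hh.
    by move: vk; rewrite hh ltnn.
  apply: (@lexflat _ x0 Xs sv k ne sh); rewrite ?ssv ?sX //; exact: svd.
move=> b.
have h := hid (a b).
have h2 : \sum_(s <- allseq d d | uniq s) be s *: value b (tau s) = 0.
  transitivity (pm b (\sum_(s <- allseq d d | uniq s) be s *: lprod mul (map (a b) s))); last by rewrite h pm0.
  rewrite hpm big_seq_cond [RHS]big_seq_cond; apply: eq_bigr => s /andP[ins us].
  by rewrite hval //; move: ins; rewrite mem_allseq => /eqP.
move: h2; rewrite big_mkcond (bigD1_seq (enum 'I_d)) ?mem_allseq ?es ?uniq_allseq //= eu.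
rewrite -big_mkcondr -vsg => /eqP; rewrite addr_eq0 => /eqP h3.
rewrite -[LHS]scale1r -(mulVf hb) -scalerA h3 scalerN -scaleNr scaler_sumr.
by apply: eq_bigr => s _; rewrite scalerA mulNr.
Qed.

Definition rk (s : 'S_n) := #|[set t : 'S_n | ltlex (code t) (code s)]|.

Lemma rk_lt (s t : 'S_n) : ltlex (code t) (code s) -> (rk t < rk s)%N.
Proof.
move=> lt; apply: proper_card; apply/properP; split.
  by apply/subsetP => u; rewrite !inE => h; exact: ltlex_trans h lt.
by exists t; rewrite !inE ?lt // ltlex_irr.
Qed.

Lemma spanned_all (s : 'S_n) : spanned s.
Proof.
move: {2}(rk s).+1 (ltnSn (rk s)) => k.
elim: k s => [//|k IH] sg lt.
have [bs|gs] := pselect (bad sg); last first.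
  exists (fun t => (t == sg)%:R); split.
    move=> t; have [-> _ //|ne] := eqVneq t sg; by rewrite /= ?(negbTE ne) mulr0n eqxx.
  move=> b; rewrite (bigD1 sg) //= eqxx scale1r big1 ?addr0 // => t /negbTE ->.
  by rewrite scale0r.
have [C [tau [hlt hv]]] := step bs.
have : forall s, exists g : 'S_n -> F, (s \in allseq d d) && (s != enum 'I_d) && uniq s ->
    (forall t, g t != 0 -> ~ bad t) /\ forall b, value b (tau s) = \sum_t g t *: value b t.
  move=> s; case: (boolP ((s \in allseq d d) && (s != enum 'I_d) && uniq s)); last first.
    by move=> _; exists (fun _ => 0).
  case/andP=> /andP[ins nes] us.
  have : spanned (tau s).
    apply: IH; rewrite -ltnS; apply: leq_trans lt; rewrite ltnS.
    exact: rk_lt (hlt s ins us nes).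
  by case=> g hg; exists g.
case/choice => G hG.
exists (fun t => \sum_(s <- allseq d d | (s != enum 'I_d) && uniq s) C s * G s t); split.
  move=> t nz bt; move/eqP: nz; apply.
  rewrite big_seq_cond big1 // => s /andP[ins /andP[nes us]].
  have hc : (s \in allseq d d) && (s != enum 'I_d) && uniq s by rewrite ins nes us.
  have [h1 _] := hG s hc.
  case: (eqVneq (G s t) 0) => [->|/h1 //]; by rewrite mulr0.
move=> b; rewrite hv.
transitivity (\sum_(s <- allseq d d | (s != enum 'I_d) && uniq s)
   C s *: \sum_t G s t *: value b t).
  rewrite big_seq_cond [RHS]big_seq_cond; apply: eq_bigr => s /andP[ins /andP[nes us]].
  have hc : (s \in allseq d d) && (s != enum 'I_d) && uniq s by rewrite ins nes us.
  have [_ h2] := hG s hc.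
  by rewrite h2.
under eq_bigr => s _ do rewrite scaler_sumr.
rewrite exchange_big /=; apply: eq_bigr => t _.
rewrite scaler_suml; apply: eq_bigr => s _.
by rewrite scalerA.
Qed.

End Lat.

End Part3.
Import Part3.

Module Part4.
Set Implicit Arguments. Unset Strict Implicit. Unset Printing Implicit Defensive.

Section Count.
Variables (d n : nat).
Hypothesis hd : 0 < d.

Definition chainP (s : 'S_n) (p : 'I_n) (m : nat) : bool :=
  `[< exists P : seq 'I_n, size P = m /\ sorted (rel_ s) (rcons P p) >].

Definition hc (s : 'S_n) (p : 'I_n) : nat := \max_(m < d | chainP s p m) m.

Lemma hc_lt s p : hc s p < d.
Proof.
rewrite /hc; case: d hd => [//|d'] _; rewrite ltnS.
by apply/bigmax_leqP => i _; rewrite -ltnS ltn_ord.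
Qed.

Lemma sorted_rcons2 (T : Type) (r : rel T) (P : seq T) p q :
  sorted r (rcons P p) -> r p q -> sorted r (rcons (rcons P p) q).
Proof.
case: P => [|x P] /=; first by move=> _ h; rewrite /= h.
by move=> h1 h2; rewrite rcons_path h1 /= last_rcons h2.
Qed.

Lemma hc_incr s p q : ~ bad d s -> rel_ s p q -> hc s p < hc s q.
Proof.
move=> gs rpq.
have : 0 < #|(fun m : 'I_d => chainP s p m)|.
  by apply/card_gt0P; exists (Ordinal hd); rewrite unfold_in; apply/asboolP; exists [::].
case/(eq_bigmax_cond (fun m : 'I_d => nat_of_ord m)) => m0 m0in hm.
have hcp : hc s p = m0 by rewrite /hc -hm.
move: m0in; rewrite unfold_in => /asboolP[P0 [sP0 srt0]].
have srt1 := sorted_rcons2 srt0 rpq.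
rewrite hcp; case: (ltnP m0.+1 d) => [lt|ge].
  have ch : chainP s q (Ordinal lt).
    by apply/asboolP; exists (rcons P0 p); rewrite size_rcons sP0.
  exact: (@leq_bigmax_cond _ (fun m : 'I_d => chainP s q m) (fun m => nat_of_ord m) (Ordinal lt) ch).
exfalso; apply: gs; exists (take d (rcons (rcons P0 p) q)); split; last exact: take_sorted.
by rewrite size_take !size_rcons sP0 ltnS ge.
Qed.

Definition enc (s : 'S_n) : {ffun 'I_n -> 'I_d} * {ffun 'I_n -> 'I_d} :=
  ([ffun p => insubd (Ordinal hd) (hc s p)], [ffun x => insubd (Ordinal hd) (hc s (s^-1 x)%g)]).

Lemma key (s t : 'S_n) (p : 'I_n) : ~ bad d s -> ~ bad d t ->
  (forall x, hc s (s^-1 x)%g = hc t (t^-1 x)%g) -> (forall x, hc s x = hc t x) ->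
  (forall q : 'I_n, q < p -> s q = t q) -> s p < t p -> False.
Proof.
move=> gs gt e2 e1 hq lt.
set q := (t^-1 (s p))%g.
have tq : t q = s p by rewrite /q permKV.
have qp : p < q.
  case: (ltngtP p q) => // [qp|qp].
    by move: (hq _ qp); rewrite tq => /perm_inj qe; move: qp; rewrite qe ltnn.
  by move: lt; rewrite -tq (ord_inj qp) ltnn.
have r : rel_ t p q by rewrite /rel_ qp tq lt.
have := hc_incr gt r.
by rewrite /q -e2 permK e1 ltnn.
Qed.

Lemma enc_inj (s t : 'S_n) : ~ bad d s -> ~ bad d t -> enc s = enc t -> s = t.
Proof.
move=> gs gt [/ffunP e1 /ffunP e2].
have e1' : forall x, hc s x = hc t x.
  by move=> x; have := congr1 val (e1 x); rewrite !ffunE !val_insubd !hc_lt.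
have e2' : forall x, hc s (s^-1 x)%g = hc t (t^-1 x)%g.
  by move=> x; have := congr1 val (e2 x); rewrite !ffunE !val_insubd !hc_lt.
have main : forall k (p : 'I_n), val p = k -> s p = t p.
  elim/ltn_ind => k IH p pk.
  have hq : forall q : 'I_n, q < p -> s q = t q by move=> q qp; apply: (IH q) => //; rewrite -pk.
  case: (ltngtP (s p) (t p)) => [lt|lt|eq]; last exact: ord_inj.
    by case: (key gs gt e2' e1' hq lt).
  by case: (@key t s p gt gs (fun x => esym (e2' x)) (fun x => esym (e1' x)) (fun q qp => esym (hq q qp)) lt).
by apply/permP => p; exact: main.
Qed.

Lemma card_good : #|[set s : 'S_n | ~~ `[< bad d s >]]| <= d ^ n * d ^ n.
Proof.
rewrite -(@card_in_imset _ _ enc).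
  by apply: leq_trans (max_card _) _; rewrite card_prod !card_ffun !card_ord.
move=> s t; rewrite !inE => /asboolPn gs /asboolPn gt; exact: enc_inj.
Qed.

End Count.

End Part4.
Import Part4.

Module Part5.
Import Order.TTheory GRing.Theory Num.Theory.
Set Implicit Arguments. Unset Strict Implicit. Unset Printing Implicit Defensive.
Local Open Scope ring_scope.

Lemma lindep (F : fieldType) (T : finType) (G : {set T}) k (v : 'I_k -> T -> F) :
  (#|G| < k)%N -> exists a : 'I_k -> F, (exists i, a i != 0) /\
    forall t, t \in G -> \sum_i a i * v i t = 0.
Proof.
move=> lt.
pose M : 'M[F]_(k, #|G|) := \matrix_(i, j) v i (enum_val j).
have nz : kermx M != 0.
  rewrite -mxrank_eq0 mxrank_ker subn_eq0 -ltnNge.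
  exact: leq_ltn_trans (rank_leq_col M) lt.
have [i hi] : exists i, row i (kermx M) != 0.
  case: (pickP (fun i => row i (kermx M) != 0)) => [i hi|h]; first by exists i.
  exfalso; move/negP: nz; apply; apply/eqP/row_matrixP => i.
  by rewrite row0; apply/eqP; move: (h i) => /negbFE.
exists (fun l => kermx M i l); split.
  case: (pickP (fun l => kermx M i l != 0)) => [l hl|h]; first by exists l.
  exfalso; move/negP: hi; apply; apply/eqP/rowP => l.
  by rewrite [LHS]mxE [RHS]mxE; apply/eqP; move: (h l) => /negbFE.
move=> t tG.
have := mulmx_ker M; move/(congr1 (row i)); rewrite row_mul row0.
move/rowP/(_ (enum_rank_in tG t)); rewrite [LHS]mxE [RHS]mxE => h; rewrite -[RHS]h.
apply: eq_bigr => l _; rewrite [row _ _ _ _]mxE [M _ _]mxE (enum_rankK_in tG tG).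
by [].
Qed.


End Part5.
Import Part5.

Unset Implicit Arguments. Set Strict Implicit. Set Printing Implicit Defensive.
Local Open Scope ring_scope.

Theorem corollary2p3 (R : realType) (F : fieldType) (hF : [pchar F] =i pred0)
  (A : lmodType F) (mul : A -> A -> A) (gr : bool -> A -> Prop)
  (sharp : A -> A) (super : bool) :
  is_assoc_algebra mul -> is_Z2_grading mul gr -> is_sharp mul gr sharp super ->
  is_PI mul ->
  exists d : R, forall n : nat, (1 <= n)%N ->
    ((cn_grs mul gr sharp n)%:R <= d ^+ n).
Proof.
move=> hA _ _ hPI.
have [d [be [hd hb hid]]] := multilin hA hPI.
exists ((4 * d ^ 2)%N%:R) => n _.
rewrite -natrX ler_nat.
pose Gs := [set m : ({perm 'I_n} * {ffun 'I_n -> kind})%type | ~~ `[< bad d m.1 >]].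
have cardG : (#|Gs| <= (4 * d ^ 2) ^ n)%N.
  apply: (@leq_trans (#|[set s : 'S_n | ~~ `[< bad d s >]]| * #|[set: {ffun 'I_n -> kind}]|)).
    rewrite -cardsX; apply: subset_leq_card; apply/subsetP => m; by rewrite !inE => ->.
  rewrite cardsT card_ffun card_prod card_bool card_ord.
  apply: leq_trans (leq_mul (card_good n hd) (leqnn _)) _.
  by rewrite -!expnMn (_ : (d * d * (2 * 2) = 4 * d ^ 2)%N) // mulnC.
rewrite /cn_grs; apply/bigmax_leqP => k /asboolP [g hg]; apply: leq_trans cardG.
rewrite leqNgt; apply/negP => lt.
have : forall s : 'S_n, spanned mul d s by move=> s; exact: (spanned_all hA hd hb hid s).
rewrite /spanned => /choice [Gam hGam].
pose V := fun (f : {ffun ({perm 'I_n} * {ffun 'I_n -> kind})%type -> F^o})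
  (t : ({perm 'I_n} * {ffun 'I_n -> kind})%type) =>
  \sum_(m : ({perm 'I_n} * {ffun 'I_n -> kind})%type | m.2 == t.2) f m * Gam m.1 t.1.
have hV : forall f sub, Pn_eval mul f sub = \sum_t V f t *: mon_eval mul sub t.
  move=> f sub; rewrite /Pn_eval.
  have e : forall (sg : 'S_n) (ka : {ffun 'I_n -> kind}),
      mon_eval mul sub (sg, ka) = value mul (fun x => sub (ka x) x) sg.
    move=> sg ka; rewrite /mon_eval /value /word; congr (lprod mul _).
    by elim: (enum _) => [|x l IH] //=; rewrite IH.
  pose X := fun (m t : ({perm 'I_n} * {ffun 'I_n -> kind})%type) =>
    (f m * Gam m.1 t.1) *: mon_eval mul sub t.
  transitivity (\sum_(m : ({perm 'I_n} * {ffun 'I_n -> kind})%type) \sum_(tau : 'S_n) X m (tau, m.2)).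
    apply: eq_bigr => [[sg ka]] _ /=; rewrite e ((hGam sg).2) scaler_sumr.
    by apply: eq_bigr => tau _; rewrite /X /= e scalerA.
  under [RHS]eq_bigr => t _ do rewrite /V scaler_suml big_mkcond.
  rewrite [RHS]exchange_big /=; apply: eq_bigr => m _.
  transitivity (\sum_(tau : 'S_n) \sum_(ka : {ffun 'I_n -> kind}) (if m.2 == ka then X m (tau, ka) else 0)).
    apply: eq_bigr => tau _; rewrite (bigD1 m.2) //= eqxx big1 ?addr0 // => ka.
    by move/negbTE; rewrite eq_sym => ->.
  by rewrite pair_bigA; apply: eq_bigr => [[tau ka]] _ /=; case: (m.2 == ka); rewrite ?scale0r.

have Vbad : forall f t, bad d t.1 -> V f t = 0.
  move=> f t bt; rewrite /V big1 // => m _.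
  by case: (eqVneq (Gam m.1 t.1) 0) => [->|/((hGam m.1).1) //]; rewrite mulr0.
have Vlin : forall (a : 'I_k -> F) t, V (\sum_i a i *: g i) t = \sum_i a i * V (g i) t.
  move=> a t; rewrite /V.
  under eq_bigr => m _ do rewrite sum_ffunE mulr_suml.
  rewrite exchange_big /=; apply: eq_bigr => i _; rewrite mulr_sumr.
  by apply: eq_bigr => m _; rewrite mulrA; congr (_ * _); rewrite ffunE.
have [a [[i0 ai0] ha]] := lindep (fun i => V (g i)) lt.
move/eqP: ai0; apply; apply: hg => sub _.
rewrite hV big1 // => t _; rewrite Vlin.
case: (boolP (t \in Gs)) => [tG|]; first by rewrite ha // scale0r.
rewrite inE negbK => /asboolP bt; rewrite big1 ?scale0r // => i _.
by rewrite Vbad // mulr0.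
Qed.
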